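(* Let $g_*$ be the standard metric on $\mathbb{S}^2$, let $f>0$ be a smooth function on $[a,b]$, and consider the metric $\gamma=ds^2+f(s)^2g_*$ on $[a,b]\times\mathbb{S}^2$. Suppose (1) $\gamma$ has positive scalar curvature; (2) $\Sigma_b:=\{b\}\times\mathbb{S}^2$ has positive mean curvature; and (3) $\mathfrak{m}_{_H}(\Sigma_b)\ge 0$. Then for any $m_e>\mathfrak{m}_{_H}(\Sigma_b)$ there exists a smooth, rotationally symmetric, asymptotically flat Riemannian $3$-manifold $M$ with boundary $\partial M$ and non-negative scalar curvature such that (i) outside a compact set, $M$ is isometric to a spatial Schwarzschild manifold of mass $m_e$; (ii) $\partial M$ has a neighborhood $U$ isometric to $\left([a,\frac{a+b}{2})\times\mathbb{S}^2,\gamma\right)$; and (iii) if $f'>0$ on $[a,b]$, then $M$ can be constructed such that every rotationally symmetric sphere in $M$ has positive constant mean curvature.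
   Context: The mean curvature of $\Sigma_b$ is computed with respect to the unit normal $\partial_s$ (so it equals $2f'(b)/f(b)$). The Hawking mass of a closed surface $S$ with induced metric and mean curvature $H$ is $\mathfrak{m}_{_H}(S)=\sqrt{\frac{|S|}{16\pi}}\left(1-\frac{1}{16\pi}\int_S H^2\,d\sigma\right)$; for $\Sigma_b$ it equals $\frac{f(b)}{2}(1-f'(b)^2)$. The spatial Schwarzschild manifold of mass $m>0$ is $\left((2m,\infty)\times\mathbb{S}^2,\ \frac{1}{1-2m/r}dr^2+r^2g_*\right)$. *)

(* Defs.v *)
From Stdlib Require Import Reals.
From Coquelicot Require Import Coquelicot.
Open Scope R_scope.

(* A rotationally symmetric (warped product) metric  ds^2 + F(s)^2 g_star  on
   I x S^2 is encoded by its warping function F : R -> R.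
   Smooth functions on closed intervals are represented by smooth functions on R
   (every smooth function on a closed interval extends smoothly, Seeley). *)
Definition smooth (F : R -> R) : Prop := forall (n : nat) (x : R), ex_derive_n F n x.

Definition warped_scal (F : R -> R) (s : R) : R :=
  2 * (1 - (Derive F s) ^ 2) / (F s) ^ 2 - 4 * Derive (Derive F) s / F s.

Definition warped_mean_curv (F : R -> R) (s : R) : R := 2 * Derive F s / F s.

Definition warped_hawking_mass (F : R -> R) (s : R) : R :=
  F s / 2 * (1 - (Derive F s) ^ 2).

(* Spatial Schwarzschild of mass m, ((2m,oo) x S^2, dr^2/(1-2m/r) + r^2 g_star),
   written in arclength coordinate s: ds^2 + r(s)^2 g_star with r' = sqrt(1 - 2m/r). *)
Definition schwarzschild_end (m : R) (F : R -> R) (s0 : R) : Prop :=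
  forall s, s0 <= s -> 2 * m < F s /\ Derive F s = sqrt (1 - 2 * m / F s).

(* Main.v *)
Require Import Defs.
From Stdlib Require Import Reals.
From Coquelicot Require Import Coquelicot.
Open Scope R_scope.
From Stdlib Require Import Lra Lia ClassicalEpsilon Ranalysis5.


Definition Cn (n : nat) (f : R -> R) := forall k x, (k <= n)%nat -> ex_derive_n f k x.

Lemma Derive_n_Sr f k x : Derive_n (Derive f) k x = Derive_n f (S k) x.
Proof.
  rewrite <- Nat.add_1_r. rewrite <- (Derive_n_comp f k 1 x). reflexivity.
Qed.

Lemma exdn_S f k x : ex_derive f x -> ex_derive_n (Derive f) k x -> ex_derive_n f (S k) x.
Proof.
  intros H1 H2. destruct k as [|k]. simpl. exact H1.
  simpl in H2 |- *. eapply ex_derive_ext; [|exact H2].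
  intros t. apply (Derive_n_Sr f k t).
Qed.

Lemma exdn_S_inv f k x : ex_derive_n f (S k) x -> ex_derive_n (Derive f) k x.
Proof.
  intros H. destruct k as [|k]. simpl. exact I.
  simpl in H |- *. eapply ex_derive_ext; [|exact H].
  intros t. symmetry. apply (Derive_n_Sr f k t).
Qed.

Lemma Cn_S f n : (forall x, ex_derive f x) -> Cn n (Derive f) -> Cn (S n) f.
Proof.
  intros H1 H2 k x Hk. destruct k as [|k]. exact I.
  apply exdn_S. apply H1. apply H2. lia.
Qed.

Lemma Cn_S_inv f n : Cn (S n) f -> (forall x, ex_derive f x) /\ Cn n (Derive f).
Proof.
  intros H. split.
  intros x. exact (H 1%nat x ltac:(lia)).
  intros k x Hk. apply exdn_S_inv. apply H. lia.
Qed.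

Lemma Cn_le n f : Cn (S n) f -> Cn n f.
Proof. intros H k x Hk. apply H. lia. Qed.

Lemma Cn_ext n f g : (forall x, f x = g x) -> Cn n f -> Cn n g.
Proof. intros E H k x Hk. eapply ex_derive_n_ext; [exact E|]. apply H; auto. Qed.

Lemma smooth_Cn f : smooth f <-> forall n, Cn n f.
Proof.
  split. intros H n k x _. apply H.
  intros H n x. apply (H n n x). lia.
Qed.

Lemma Cn_const n c : Cn n (fun _ => c).
Proof. intros k x _. apply ex_derive_n_const. Qed.

Lemma Cn_id n : Cn n (fun x => x).
Proof.
  intros k x _. eapply ex_derive_n_ext; [|apply (ex_derive_n_pow k 1)].
  intros t; simpl; ring.
Qed.

Lemma Cn_plus n : forall f g, Cn n f -> Cn n g -> Cn n (fun x => f x + g x).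
Proof.
  induction n as [|n IH]; intros f g Hf Hg.
  - intros k x Hk. assert (k = 0%nat) by lia. subst. exact I.
  - destruct (Cn_S_inv _ _ Hf) as [Df Hf'].
    destruct (Cn_S_inv _ _ Hg) as [Dg Hg'].
    apply Cn_S. intros x. apply (ex_derive_plus f g); auto.
    eapply Cn_ext; [|apply (IH _ _ Hf' Hg')].
    intros x. simpl. rewrite Derive_plus; auto.
Qed.

Lemma Cn_scal n a f : Cn n f -> Cn n (fun x => a * f x).
Proof. intros H k x Hk. apply ex_derive_n_scal_l. apply H; auto. Qed.

Lemma Cn_opp n f : Cn n f -> Cn n (fun x => - f x).
Proof. intros H k x Hk. apply ex_derive_n_opp. apply H; auto. Qed.

Lemma Cn_minus n f g : Cn n f -> Cn n g -> Cn n (fun x => f x - g x).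
Proof. intros. apply Cn_plus; auto. apply Cn_opp; auto. Qed.

Lemma Cn_mult n : forall f g, Cn n f -> Cn n g -> Cn n (fun x => f x * g x).
Proof.
  induction n as [|n IH]; intros f g Hf Hg.
  - intros k x Hk. assert (k = 0%nat) by lia. subst. exact I.
  - destruct (Cn_S_inv _ _ Hf) as [Df Hf'].
    destruct (Cn_S_inv _ _ Hg) as [Dg Hg'].
    apply Cn_S. intros x. apply ex_derive_mult; auto.
    eapply Cn_ext; [|apply Cn_plus; [apply (IH _ _ Hf' (Cn_le _ _ Hg))|apply (IH _ _ (Cn_le _ _ Hf) Hg')]].
    intros x. simpl. rewrite Derive_mult; auto.
Qed.

Lemma Cn_comp n : forall f g, Cn n f -> Cn n g -> Cn n (fun x => f (g x)).
Proof.
  induction n as [|n IH]; intros f g Hf Hg.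
  - intros k x Hk. assert (k = 0%nat) by lia. subst. exact I.
  - destruct (Cn_S_inv _ _ Hf) as [Df Hf'].
    destruct (Cn_S_inv _ _ Hg) as [Dg Hg'].
    apply Cn_S. intros x. apply ex_derive_comp; auto.
    eapply Cn_ext; [|apply Cn_mult; [apply (IH _ _ Hf' (Cn_le _ _ Hg))| exact Hg']].
    intros x. simpl. symmetry. rewrite (Derive_comp f g x); auto. ring.
Qed.

Lemma Cn_inv n : forall f, (forall x, f x <> 0) -> Cn n f -> Cn n (fun x => / f x).
Proof.
  induction n as [|n IH]; intros f Hnz Hf.
  - intros k x Hk. assert (k = 0%nat) by lia. subst. exact I.
  - destruct (Cn_S_inv _ _ Hf) as [Df Hf'].
    apply Cn_S. intros x. apply ex_derive_inv; auto.
    assert (Hi := IH f Hnz (Cn_le _ _ Hf)).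
    eapply Cn_ext; [|apply Cn_opp, Cn_mult; [exact Hf'| apply Cn_mult; exact Hi]].
    intros x. simpl. rewrite Derive_inv; auto. field. auto.
Qed.

Lemma is_derive_sqrt_pos y : 0 < y -> is_derive sqrt y (/ (2 * sqrt y)).
Proof. intros H. apply is_derive_Reals. apply derivable_pt_lim_sqrt. auto. Qed.

Lemma Cn_sqrt n : forall f, (forall x, 0 < f x) -> Cn n f -> Cn n (fun x => sqrt (f x)).
Proof.
  induction n as [|n IH]; intros f Hp Hf.
  - intros k x Hk. assert (k = 0%nat) by lia. subst. exact I.
  - destruct (Cn_S_inv _ _ Hf) as [Df Hf'].
    assert (Hd : forall x, is_derive (fun x => sqrt (f x)) x (Derive f x * / (2 * sqrt (f x)))).
    { intros x. apply (is_derive_comp sqrt f). apply is_derive_sqrt_pos; auto.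
      apply Derive_correct. auto. }
    apply Cn_S. intros x; eexists; apply Hd.
    assert (Hi := Cn_inv n _ (fun x => Rgt_not_eq _ _ (sqrt_lt_R0 _ (Hp x))) (IH f Hp (Cn_le _ _ Hf))).
    eapply Cn_ext; [|apply Cn_mult; [exact Hf'| apply Cn_scal with (a := /2); exact Hi]].
    intros x. simpl. symmetry. assert (0 < sqrt (f x)) by (apply sqrt_lt_R0; auto). replace (Derive f x * (/ 2 * / sqrt (f x))) with (Derive f x * / (2 * sqrt (f x))) by (field; lra). apply is_derive_unique, Hd.
Qed.

Lemma Cn_exp n : Cn n exp.
Proof.
  induction n as [|n IH].
  - intros k x Hk. assert (k = 0%nat) by lia. subst. exact I.
  - apply Cn_S. intros x. eexists. apply is_derive_Reals, derivable_pt_lim_exp.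
    eapply Cn_ext; [|exact IH]. intros x. symmetry. apply is_derive_unique.
    apply is_derive_Reals, derivable_pt_lim_exp.
Qed.

Lemma smooth_Derive f : smooth f -> smooth (Derive f).
Proof.
  intros H. apply smooth_Cn. intros n. rewrite smooth_Cn in H.
  apply (Cn_S_inv f n (H (S n))).
Qed.

Lemma smooth_exd f x : smooth f -> ex_derive f x.
Proof. intros H. apply (H 1%nat x). Qed.


Lemma exp_ge_pow y k : 0 <= y -> y ^ (S k) / INR (Factorial.fact (S k)) <= exp y.
Proof.
  intros Hy. eapply Rle_trans; [|apply (exp_ge_taylor y (S k) Hy)].
  rewrite tech5. assert (0 <= sum_f_R0 (fun k0 : nat => y ^ k0 / INR (Factorial.fact k0)) k).
  { apply cond_pos_sum. intros i. apply Rle_mult_inv_pos. apply pow_le; auto.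
    apply INR_fact_lt_0. }
  lra.
Qed.

Lemma pow_exp_small k eps : 0 < eps -> exists M, 0 < M /\ forall y, M <= y -> y ^ k * exp (- y) <= eps.
Proof.
  intros He. set (C := INR (Factorial.fact (S k))).
  assert (HC : 0 < C) by apply INR_fact_lt_0.
  exists (Rmax 1 (C / eps)). split. apply Rlt_le_trans with 1; [lra|apply Rmax_l].
  intros y Hy. assert (H1 : 1 <= y) by (eapply Rle_trans; [apply Rmax_l|exact Hy]).
  assert (H2 : C / eps <= y) by (eapply Rle_trans; [apply Rmax_r|exact Hy]).
  assert (Hex := exp_ge_pow y k ltac:(lra)). fold C in Hex.
  assert (Hpos : 0 < exp y) by apply exp_pos.
  rewrite exp_Ropp.
  assert (Hyk : 0 < y ^ k) by (apply pow_lt; lra).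
  (* y^k / exp y <= y^k * C / y^(S k) = C / y <= eps *)
  apply Rle_trans with (C / y).
  - simpl in Hex. apply Rmult_le_reg_r with (exp y); auto.
    rewrite Rmult_assoc, Rinv_l by lra. rewrite Rmult_1_r.
    apply Rmult_le_reg_r with (y / C). apply Rdiv_lt_0_compat; lra.
    replace (C / y * exp y * (y / C)) with (exp y) by (field; lra).
    replace (y ^ k * (y / C)) with (y * y ^ k / C) by (field; lra). exact Hex.
  - apply Rmult_le_reg_r with (y / eps). apply Rdiv_lt_0_compat; lra.
    replace (C / y * (y / eps)) with (C / eps) by (field; lra).
    replace (eps * (y / eps)) with y by (field; lra). exact H2.
Qed.

Lemma is_derive_val (f : R -> R) x l l' : is_derive f x l -> l = l' -> is_derive f x l'.
Proof. intros H E; subst; exact H. Qed.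

Lemma is_derive_idR (x : R) : is_derive (fun x : R => x) x 1.
Proof. apply is_derive_Reals, derivable_pt_lim_id. Qed.

Inductive isP : (R -> R) -> Prop :=
| isP_c c : isP (fun _ => c)
| isP_add P Q : isP P -> isP Q -> isP (fun y => P y + Q y)
| isP_scal c P : isP P -> isP (fun y => c * P y)
| isP_mulx P : isP P -> isP (fun y => y * P y).

Lemma isP_der P : isP P -> exists P', isP P' /\ forall y, is_derive P y (P' y).
Proof.
  induction 1 as [c|P Q _ [P' [HP' DP]] _ [Q' [HQ' DQ]]|c P _ [P' [HP' DP]]|P HP [P' [HP' DP]]].
  - exists (fun _ => 0). split. constructor. intros y. apply (is_derive_const c y).
  - exists (fun y => P' y + Q' y). split. constructor; auto.
    intros y. apply (is_derive_plus P Q); auto.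
  - exists (fun y => c * P' y). split. constructor; auto.
    intros y. apply (is_derive_scal P y c); auto.
  - exists (fun y => P y + y * P' y). split. constructor; auto. constructor; auto.
    intros y.
    assert (H := is_derive_mult (fun y => y) P y 1 (P' y) (is_derive_id y) (DP y) ltac:(intros; apply Rmult_comm)).
    simpl in H. unfold plus, mult in H; simpl in H. unfold plus, mult in H; simpl in H.
    eapply is_derive_val; [exact H|]. now rewrite Rmult_1_l.
Qed.

Lemma isP_lim P : isP P -> forall k eps, 0 < eps ->
  exists M, 0 < M /\ forall y, M <= y -> Rabs (y ^ k * P y) * exp (- y) <= eps.
Proof.
  induction 1 as [c|P Q _ IHP _ IHQ|c P _ IHP|P _ IHP]; intros k eps He.
  - assert (Hc : 0 < Rabs c + 1) by (generalize (Rabs_pos c); lra).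
    destruct (pow_exp_small k (eps / (Rabs c + 1))) as [M [HM HMy]].
    apply Rdiv_lt_0_compat; lra.
    exists M; split; auto. intros y Hy.
    assert (H := HMy y Hy).
    rewrite Rabs_mult, (Rabs_pos_eq (y ^ k)) by (apply pow_le; lra).
    assert (0 <= y ^ k * exp (- y)) by (apply Rmult_le_pos; [apply pow_le; lra| apply Rlt_le, exp_pos]).
    apply Rle_trans with (Rabs c * (eps / (Rabs c + 1))).
    replace (y ^ k * Rabs c * exp (- y)) with (Rabs c * (y ^ k * exp (- y))) by ring.
    apply Rmult_le_compat_l; auto. apply Rabs_pos.
    apply Rmult_le_reg_r with (Rabs c + 1); auto.
    replace (Rabs c * (eps / (Rabs c + 1)) * (Rabs c + 1)) with (Rabs c * eps) by (field; lra).
    generalize (Rabs_pos c); nra.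
  - destruct (IHP k (eps/2)) as [M1 [HM1 H1]]. lra.
    destruct (IHQ k (eps/2)) as [M2 [HM2 H2]]. lra.
    exists (Rmax M1 M2). split. apply Rlt_le_trans with M1; auto; apply Rmax_l.
    intros y Hy. assert (A1 := H1 y (Rle_trans _ _ _ (Rmax_l _ _) Hy)).
    assert (A2 := H2 y (Rle_trans _ _ _ (Rmax_r _ _) Hy)).
    assert (Hex : 0 < exp (- y)) by apply exp_pos.
    replace (y ^ k * (P y + Q y)) with (y ^ k * P y + y ^ k * Q y) by ring.
    apply Rle_trans with ((Rabs (y ^ k * P y) + Rabs (y ^ k * Q y)) * exp (- y)).
    apply Rmult_le_compat_r. lra. apply Rabs_triang. lra.
  - assert (Hc : 0 < Rabs c + 1) by (generalize (Rabs_pos c); lra).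
    destruct (IHP k (eps / (Rabs c + 1))) as [M [HM H]]. apply Rdiv_lt_0_compat; lra.
    exists M; split; auto. intros y Hy. assert (A := H y Hy).
    replace (y ^ k * (c * P y)) with (c * (y ^ k * P y)) by ring.
    rewrite Rabs_mult, Rmult_assoc.
    apply Rle_trans with (Rabs c * (eps / (Rabs c + 1))).
    apply Rmult_le_compat_l; auto. apply Rabs_pos.
    apply Rmult_le_reg_r with (Rabs c + 1); auto.
    replace (Rabs c * (eps / (Rabs c + 1)) * (Rabs c + 1)) with (Rabs c * eps) by (field; lra).
    generalize (Rabs_pos c); nra.
  - destruct (IHP (S k) eps He) as [M [HM H]]. exists M; split; auto.
    intros y Hy. replace (y ^ k * (y * P y)) with (y ^ S k * P y) by (simpl; ring). auto.
Qed.

Definition gP (P : R -> R) (x : R) := if Rlt_dec 0 x then P (/ x) * exp (- / x) else 0.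

Definition Tp (P P' : R -> R) := fun y => y * (y * (P y + (-1) * P' y)).

Lemma gP_der P P' : isP P -> (forall y, is_derive P y (P' y)) ->
  forall x, is_derive (gP P) x (gP (Tp P P') x).
Proof.
  intros HP DP x.
  destruct (Rlt_dec 0 x) as [Hx|Hx].
  - apply is_derive_ext_loc with (f := fun x => P (/ x) * exp (- / x)).
    { apply (locally_interval _ x 0 p_infty Hx I). intros y Hy _. simpl in Hy. unfold gP.
      destruct (Rlt_dec 0 y); [reflexivity| lra]. }
    unfold gP. destruct (Rlt_dec 0 x); [|lra].
    assert (Hi : is_derive (fun x => / x) x (- / x ^ 2)).
    { eapply is_derive_val. apply (is_derive_inv (fun x => x) x 1). apply is_derive_idR. lra.
      simpl. field. lra. }
    assert (H1 : is_derive (fun x => P (/ x)) x (- / x ^ 2 * P' (/ x))).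
    { apply (is_derive_comp P (fun x => / x)). apply DP. exact Hi. }
    assert (H2 : is_derive (fun x => exp (- / x)) x (/ x ^ 2 * exp (- / x))).
    { eapply is_derive_val. apply (is_derive_comp exp (fun x => - / x)).
      apply is_derive_Reals, derivable_pt_lim_exp.
      apply (is_derive_opp (fun x => / x)). exact Hi.
      unfold scal, opp; simpl; unfold mult; simpl. unfold opp; simpl. ring. }
    eapply is_derive_val. apply (is_derive_mult (fun x => P (/ x)) (fun x => exp (- / x))); eauto.
    intros; apply Rmult_comm.
    unfold Tp, plus, mult; simpl. field. lra.
  - destruct (Rlt_dec x 0) as [Hx'|Hx'].
    + apply is_derive_ext_loc with (f := fun _ => 0).
      { apply (locally_interval _ x m_infty 0 I Hx'). intros y _ Hy. simpl in Hy. unfold gP.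
        destruct (Rlt_dec 0 y); [lra| reflexivity]. }
      unfold gP. destruct (Rlt_dec 0 x); [lra|]. apply is_derive_Reals, derivable_pt_lim_const.
    + assert (x = 0) by lra. subst x.
      unfold gP at 2. destruct (Rlt_dec 0 0); [lra|].
      apply is_derive_Reals. intros eps He.
      destruct (isP_lim P HP 1 (eps / 2)) as [M [HM HMy]]. lra.
      exists (mkposreal (/ M) (Rinv_0_lt_compat _ HM)). simpl.
      intros h Hh0 Hh. unfold gP. rewrite Rplus_0_l.
      destruct (Rlt_dec 0 0); [lra|]. destruct (Rlt_dec 0 h) as [Hhp|Hhn].
      * assert (A := HMy (/ h)).
        rewrite Rabs_pos_eq in Hh by lra.
        assert (HMh : M <= / h).
        { apply Rmult_le_reg_r with h; auto. rewrite Rinv_l by lra.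
          apply Rmult_le_reg_l with (/ M). apply Rinv_0_lt_compat; auto.
          rewrite <- Rmult_assoc, Rinv_l, Rmult_1_l, Rmult_1_r by lra. lra. }
        specialize (A HMh). rewrite Rabs_mult in A.
        replace ((P (/ h) * exp (- / h) - 0) / h - 0) with (/ h * P (/ h) * exp (- / h)) by (field; lra).
        rewrite Rabs_mult, Rabs_mult. simpl in A.
        rewrite Rmult_1_r in A. rewrite (Rabs_pos_eq (exp _)) by (apply Rlt_le, exp_pos). lra.
      * replace ((0 - 0) / h - 0) with 0 by (field; auto). rewrite Rabs_R0. lra.
Qed.

Lemma isP_Tp P P' : isP P -> isP P' -> isP (Tp P P').
Proof. intros. unfold Tp. do 2 apply isP_mulx. apply isP_add; auto. apply isP_scal; auto. Qed.

Lemma gP_Cn n : forall P, isP P -> Cn n (gP P).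
Proof.
  induction n as [|n IH]; intros P HP.
  - intros k x Hk. assert (k = 0%nat) by lia. subst. exact I.
  - destruct (isP_der P HP) as [P' [HP' DP]].
    apply Cn_S. intros x. eexists. apply (gP_der P P' HP DP x).
    eapply Cn_ext; [|apply (IH _ (isP_Tp P P' HP HP'))].
    intros x. symmetry. apply is_derive_unique. apply (gP_der P P' HP DP x).
Qed.

Definition psi := gP (fun _ => 1).
Definition psi' := gP (Tp (fun _ => 1) (fun _ => 0)).

Lemma psi_der x : is_derive psi x (psi' x).
Proof.
  apply gP_der. constructor. intros y. apply is_derive_Reals, derivable_pt_lim_const.
Qed.

Lemma psi_Cn n : Cn n psi.
Proof. apply gP_Cn. constructor. Qed.

Lemma psi_neg x : x <= 0 -> psi x = 0.
Proof. intros H. unfold psi, gP. destruct (Rlt_dec 0 x); [lra|auto]. Qed.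
Lemma psi_pos x : 0 < x -> 0 < psi x.
Proof. intros H. unfold psi, gP. destruct (Rlt_dec 0 x); [|lra]. rewrite Rmult_1_l. apply exp_pos. Qed.
Lemma psi_ge0 x : 0 <= psi x.
Proof. destruct (Rle_dec x 0). rewrite psi_neg; lra. apply Rlt_le, psi_pos; lra. Qed.
Lemma psi'_neg x : x <= 0 -> psi' x = 0.
Proof. intros H. unfold psi', gP. destruct (Rlt_dec 0 x); [lra|auto]. Qed.
Lemma psi'_ge0 x : 0 <= psi' x.
Proof. unfold psi', gP, Tp. destruct (Rlt_dec 0 x). 2: lra.
  apply Rmult_le_pos. replace (/ x * (/ x * (1 + -1 * 0))) with (/x * /x) by ring.
  apply Rle_0_sqr. apply Rlt_le, exp_pos. Qed.

Definition st x := psi x / (psi x + psi (1 - x)).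
Definition st' x := (psi' x * psi (1 - x) + psi x * psi' (1 - x)) / (psi x + psi (1 - x)) ^ 2.

Lemma st_den x : 0 < psi x + psi (1 - x).
Proof. destruct (Rlt_dec 0 x). generalize (psi_pos x r) (psi_ge0 (1 - x)); lra.
  generalize (psi_pos (1 - x) ltac:(lra)) (psi_ge0 x); lra. Qed.

Lemma st_der x : is_derive st x (st' x).
Proof.
  assert (Hd := st_den x).
  assert (H1 : is_derive (fun x => psi (1 - x)) x (-1 * psi' (1 - x))).
  { apply (is_derive_comp psi (fun x => 1 - x)). apply psi_der.
    eapply is_derive_val. apply (is_derive_minus (fun _ => 1) (fun x => x)).
    apply is_derive_Reals, derivable_pt_lim_const. apply is_derive_idR.
    unfold minus, plus, opp; simpl. ring. }
  eapply is_derive_val. apply (is_derive_div psi (fun x => psi x + psi (1 - x))).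
  apply psi_der. apply (is_derive_plus psi (fun x => psi (1 - x))). apply psi_der. exact H1. lra.
  unfold st', plus; simpl. field. lra.
Qed.

Lemma st_Cn n : Cn n st.
Proof.
  unfold st. apply Cn_mult. apply psi_Cn.
  apply Cn_inv. intros x; generalize (st_den x); lra.
  apply Cn_plus. apply psi_Cn. apply Cn_comp. apply psi_Cn. apply Cn_minus. apply Cn_const. apply Cn_id.
Qed.

Lemma st_0 x : x <= 0 -> st x = 0.
Proof. intros H. unfold st. rewrite psi_neg by auto. unfold Rdiv. ring. Qed.
Lemma st_1 x : 1 <= x -> st x = 1.
Proof. intros H. unfold st. rewrite (psi_neg (1 - x)) by lra. rewrite Rplus_0_r.
  field. generalize (psi_pos x ltac:(lra)); lra. Qed.
Lemma st_ge0 x : 0 <= st x.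
Proof. unfold st. apply Rle_mult_inv_pos. apply psi_ge0. apply st_den. Qed.
Lemma st_le1 x : st x <= 1.
Proof. unfold st. assert (H := st_den x). generalize (psi_ge0 (1 - x)); intros.
  apply Rmult_le_reg_r with (psi x + psi (1 - x)); auto. unfold Rdiv.
  rewrite Rmult_assoc, Rinv_l by lra. lra. Qed.
Lemma st_pos x : 0 < x -> 0 < st x.
Proof. intros H. unfold st. apply Rdiv_lt_0_compat. apply psi_pos; auto. apply st_den. Qed.
Lemma st_lt1 x : x < 1 -> st x < 1.
Proof. intros H. unfold st. assert (Hd := st_den x). assert (Hp := psi_pos (1 - x) ltac:(lra)).
  apply Rmult_lt_reg_r with (psi x + psi (1 - x)); auto. unfold Rdiv.
  rewrite Rmult_assoc, Rinv_l by lra. lra. Qed.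
Lemma st'_ge0 x : 0 <= st' x.
Proof. unfold st'. apply Rle_mult_inv_pos.
  generalize (psi_ge0 x) (psi_ge0 (1-x)) (psi'_ge0 x) (psi'_ge0 (1 - x)); intros; nra.
  apply pow_lt. apply st_den. Qed.
Lemma st'_out x : x <= 0 \/ 1 <= x -> st' x = 0.
Proof. intros [H|H]; unfold st'.
  rewrite (psi_neg x), (psi'_neg x) by auto. unfold Rdiv; ring.
  rewrite (psi_neg (1 - x)), (psi'_neg (1 - x)) by lra. unfold Rdiv; ring. Qed.

Definition cut (al d t : R) := st ((t - al) / d).

Lemma cut_der al d t : 0 < d -> is_derive (cut al d) t (st' ((t - al) / d) / d).
Proof.
  intros Hd. unfold cut. eapply is_derive_val.
  apply (is_derive_comp st (fun t => (t - al) / d)). apply st_der.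
  auto_derive. auto. reflexivity. unfold scal; simpl; unfold mult; simpl. field. lra.
Qed.

Lemma cut_Cn al d n : Cn n (cut al d).
Proof.
  unfold cut. apply Cn_comp. apply st_Cn.
  eapply Cn_ext; [|apply Cn_scal with (a := / d); apply Cn_minus; [apply Cn_id| apply Cn_const]].
  intros x. cbv beta. unfold Rdiv. apply Rmult_comm.
Qed.


Lemma cont_of_ex f x : ex_derive f x -> continuity_pt f x.
Proof. intros H. apply continuity_pt_filterlim. apply (ex_derive_continuous f x H). Qed.

Lemma smooth_cont f x : smooth f -> continuity_pt f x.
Proof. intros H. apply cont_of_ex, smooth_exd, H. Qed.

Lemma smooth_piece (A B : R -> R) al be : al < be -> smooth A -> smooth B ->
  (forall x, al < x < be -> A x = B x) ->
  smooth (fun x => if Rle_dec x ((al + be) / 2) then A x else B x).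
Proof.
  intros Hab HA HB E n x.
  destruct (Rlt_dec x be) as [Hx|Hx].
  - apply ex_derive_n_ext_loc with A. 2: apply HA.
    apply (locally_interval _ x m_infty be I Hx). intros y _ Hy. simpl in Hy.
    destruct (Rle_dec y ((al + be) / 2)); auto. apply E. lra.
  - apply ex_derive_n_ext_loc with B. 2: apply HB.
    apply (locally_interval _ x al p_infty ltac:(simpl; lra) I). intros y Hy _. simpl in Hy.
    destruct (Rle_dec y ((al + be) / 2)); auto. symmetry. apply E. lra.
Qed.

Lemma loc_D2 (F G : R -> R) (x : R) (lo hi : Rbar) : Rbar_lt lo x -> Rbar_lt x hi ->
  (forall y : R, Rbar_lt lo y -> Rbar_lt y hi -> F y = G y) ->
  Derive F x = Derive G x /\ Derive (Derive F) x = Derive (Derive G) x.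
Proof.
  intros H1 H2 E. split.
  - apply Derive_ext_loc. apply (locally_interval _ x lo hi H1 H2). auto.
  - apply Derive_ext_loc. apply (locally_interval _ x lo hi H1 H2).
    intros y Hy1 Hy2. apply Derive_ext_loc. apply (locally_interval _ y lo hi Hy1 Hy2). auto.
Qed.

Lemma smooth_trans P a : smooth P -> smooth (fun s => P (a + s)).
Proof.
  intros H n x. eapply ex_derive_n_ext; [|apply (ex_derive_n_comp_trans P n x a)].
  intros t; simpl. now rewrite Rplus_comm. apply H.
Qed.

Lemma Derive_trans P a s : smooth P -> Derive (fun s => P (a + s)) s = Derive P (a + s).
Proof.
  intros H. apply is_derive_unique. eapply is_derive_val.
  apply (is_derive_comp P (fun s => a + s)). apply Derive_correct, smooth_exd, H.
  auto_derive. auto. reflexivity. unfold scal; simpl; unfold mult; simpl. ring.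
Qed.

Lemma Derive2_trans P a s : smooth P ->
  Derive (Derive (fun s => P (a + s))) s = Derive (Derive P) (a + s).
Proof.
  intros H. rewrite (Derive_ext _ (fun s => Derive P (a + s))).
  apply Derive_trans. apply smooth_Derive, H.
  intros t. apply Derive_trans, H.
Qed.

Lemma prim_der (J : R -> R) t0 c : smooth J ->
  forall t, is_derive (fun t => c + RInt J t0 t) t (J t).
Proof.
  intros HJ t. eapply is_derive_val.
  apply (is_derive_plus (fun _ => c) (fun t => RInt J t0 t)).
  apply is_derive_Reals, derivable_pt_lim_const.
  apply (is_derive_RInt J (fun t => RInt J t0 t) t0 t).
  apply filter_forall. intros b. apply (@RInt_correct R_CompleteNormedModule J t0 b). apply ex_RInt_continuous.
  intros z _. exact (ex_derive_continuous J z (smooth_exd J z HJ)).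
  exact (ex_derive_continuous J t (smooth_exd J t HJ)).
  unfold plus; simpl. ring.
Qed.

Lemma smooth_of_der (S J : R -> R) : smooth J -> (forall t, is_derive S t (J t)) -> smooth S.
Proof.
  intros HJ HS. apply smooth_Cn. intros n. destruct n as [|n].
  intros k x Hk. assert (k = 0%nat) by lia. subst. exact I.
  apply Cn_S. intros x; eexists; apply HS.
  eapply Cn_ext; [|apply (proj1 (smooth_Cn J) HJ n)].
  intros x. symmetry. apply is_derive_unique, HS.
Qed.

Lemma incr_of_der (S : R -> R) : (forall t, ex_derive S t) -> (forall t, 0 < Derive S t) ->
  forall x y, x < y -> S x < S y.
Proof.
  intros HS Hp x y Hxy.
  destruct (MVT_gen S x y (Derive S)) as [c [Hc E]].
  intros z _. apply Derive_correct, HS.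
  intros z _. apply cont_of_ex, HS.
  specialize (Hp c). nra.
Qed.

Lemma inv_smooth (S : R -> R) : smooth S -> (forall t, 0 < Derive S t) ->
  (forall s, exists t, S t = s) ->
  exists T, smooth T /\ (forall s, S (T s) = s) /\ (forall t, T (S t) = t) /\
    (forall s, Derive T s = / Derive S (T s)).
Proof.
  intros HS Hp Hsurj.
  assert (HSd : forall t, ex_derive S t) by (intros; apply smooth_exd, HS).
  assert (Hinc := incr_of_der S HSd Hp).
  assert (Hle : forall x y, S x <= S y -> x <= y).
  { intros x y H. destruct (Rle_dec x y); auto. assert (S y < S x) by (apply Hinc; lra). lra. }
  set (T := fun s => proj1_sig (constructive_indefinite_description _ (Hsurj s))).
  assert (HST : forall s, S (T s) = s).
  { intros s. unfold T. destruct (constructive_indefinite_description _ _). auto. }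
  assert (HTS : forall t, T (S t) = t).
  { intros t. apply Rle_antisym; apply Hle; rewrite HST; lra. }
  assert (HTle : forall s1 s2, s1 <= s2 -> T s1 <= T s2).
  { intros s1 s2 H. apply Hle. rewrite !HST. auto. }
  assert (HTd : forall s, is_derive T s (/ Derive S (T s))).
  { intros s.
    assert (Hc : continuity_pt T s).
    { apply (continuity_pt_recip_interv S T (T s - 1) (T s + 1)). lra.
      intros x y _ Hxy _. apply Hinc; auto.
      intros x _ _. unfold comp, id. apply HST.
      intros x H1 H2. split; apply Hle; rewrite HST; auto.
      intros a _. apply cont_of_ex, HSd.
      pattern s at 2 3; rewrite <- (HST s). split; apply Hinc; lra. }
    assert (Hi : T (s - 1) <= T s <= T (s + 1)) by (split; apply HTle; lra).
    assert (HD := derivable_pt_lim_recip_interv S T (s - 1) (s + 1) s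
      (fun a _ => ex_derive_Reals_0 S a (HSd a)) Hc ltac:(lra) ltac:(lra) Hi
      (fun x _ => HST x)).
    rewrite Derive_Reals in HD. specialize (Hp (T s)).
    apply is_derive_Reals. replace (/ Derive S (T s)) with (1 / Derive S (T s)) by (field; lra).
    apply HD. lra. }
  exists T. split; [|split; [|split]]; auto.
  - apply smooth_Cn. intros n. induction n as [|n IH].
    intros k x Hk. assert (k = 0%nat) by lia. subst. exact I.
    apply Cn_S. intros x; eexists; apply HTd.
    eapply Cn_ext; [|apply Cn_inv; [| apply Cn_comp; [apply (proj1 (smooth_Cn _) (smooth_Derive _ HS) n)| exact IH]]].
    intros x. symmetry. apply is_derive_unique, HTd.
    intros x. specialize (Hp (T x)). lra.
  - intros s. apply is_derive_unique, HTd.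
Qed.


Lemma div_le0 x d : 0 < d -> x <= 0 -> x / d <= 0.
Proof. intros Hd Hx. assert (0 < / d) by (apply Rinv_0_lt_compat; auto). unfold Rdiv. nra. Qed.
Lemma div_ge1 x d : 0 < d -> d <= x -> 1 <= x / d.
Proof. intros Hd Hx. assert (0 < / d) by (apply Rinv_0_lt_compat; auto).
  assert (d * / d = 1) by (field; lra). unfold Rdiv. nra. Qed.
Lemma div_pos' x d : 0 < d -> 0 < x -> 0 < x / d.
Proof. intros. apply Rdiv_lt_0_compat; auto. Qed.
Lemma div_lt1 x d : 0 < d -> x < d -> x / d < 1.
Proof. intros Hd Hx. assert (0 < / d) by (apply Rinv_0_lt_compat; auto).
  assert (d * / d = 1) by (field; lra). unfold Rdiv. nra. Qed.


Lemma cut_0 al d t : 0 < d -> t <= al -> cut al d t = 0.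
Proof. intros. unfold cut. apply st_0. apply div_le0; lra. Qed.
Lemma cut_1 al d t : 0 < d -> al + d <= t -> cut al d t = 1.
Proof. intros. unfold cut. apply st_1. apply div_ge1; lra. Qed.
Lemma cut_ge0 al d t : 0 <= cut al d t.
Proof. apply st_ge0. Qed.
Lemma cut_le1 al d t : cut al d t <= 1.
Proof. apply st_le1. Qed.
Lemma cut_pos al d t : 0 < d -> al < t -> 0 < cut al d t.
Proof. intros. apply st_pos. apply div_pos'; lra. Qed.
Lemma cut_lt1 al d t : 0 < d -> t < al + d -> cut al d t < 1.
Proof. intros. apply st_lt1. apply div_lt1; lra. Qed.
Lemma Dcut al d t : 0 < d -> Derive (cut al d) t = st' ((t - al) / d) / d.
Proof. intros. apply is_derive_unique, cut_der; auto. Qed.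
Lemma Dcut_ge0 al d t : 0 < d -> 0 <= Derive (cut al d) t.
Proof. intros. rewrite Dcut by auto. apply Rle_mult_inv_pos; auto. apply st'_ge0. Qed.
Lemma Dcut_out al d t : 0 < d -> t <= al \/ al + d <= t -> Derive (cut al d) t = 0.
Proof. intros Hd [H|H]; rewrite Dcut by auto; rewrite st'_out; try (unfold Rdiv; ring).
  left; apply div_le0; lra. right; apply div_ge1; lra. Qed.
Lemma cut_smooth al d : smooth (cut al d).
Proof. apply smooth_Cn. intros n. apply cut_Cn. Qed.
Lemma cut_exd al d t : ex_derive (cut al d) t.
Proof. apply smooth_exd, cut_smooth. Qed.

Definition hh b d t := (1 - cut (b - 8*d) d t) + cut b d t.
Definition ft f b d t := sqrt (f t ^ 2 + hh b d t).
Definition c3 b d t := cut (b - d) d t.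
Definition LL (f : R -> R) b d t := f b + (t - (b - d)).
Definition RR f b d t := (1 - c3 b d t) * ft f b d t + c3 b d t * LL f b d t.
Definition c1 b d t := cut (b - 2*d) d t.
Definition A2 me c := 2 * me / (1 - c).
Definition A1 (f : R -> R) b d me c := (Rmax (f b + d) (2*me) + A2 me c) / 2.
Definition tC f b d me c := b - d + A1 f b d me c - f b.
Definition tD (f : R -> R) b d me c := b - d + A2 me c - f b.
Definition c2 f b d me c t := cut (tC f b d me c) (tD f b d me c - tC f b d me c) t.
Definition h1 b d t := 1 - cut (b - 6*d) d t.
Definition WW f b d me c t := (1 - c1 b d t) * (Derive f t ^ 2 + h1 b d t)
   + (c1 b d t - c2 f b d me c t) * c + c2 f b d me c t * (1 - 2 * me / RR f b d t).
Definition JJ f b d me c t := h1 b d t + (1 - h1 b d t) * (Derive (RR f b d) t / sqrt (WW f b d me c t)).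
Definition SS f b d me c t := (b - 4*d) + RInt (JJ f b d me c) (b - 4*d) t.

Definition Hyps f b me c d := 0 < d /\ smooth f /\
  (forall t, b - 8*d <= t <= b -> 0 < f t /\ 0 < warped_scal f t /\ 0 < Derive f t /\ c < Derive f t ^ 2) /\
  0 < c < 1 /\ 0 < me /\ f b + d < A2 me c.


Ltac unH H := destruct H as [Hd [Hf [Hreg [Hc [Hme HA2]]]]].

Lemma f_incr f b me c d x y : Hyps f b me c d -> b - 8*d <= x -> x <= y -> y <= b -> f x <= f y.
Proof.
  intros H Hx Hxy Hy. unH H.
  destruct (MVT_gen f x y (Derive f)) as [z [Hz E]].
  intros w _. apply Derive_correct, smooth_exd, Hf.
  intros w _. apply smooth_cont, Hf.
  rewrite Rmin_left, Rmax_right in Hz by lra.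
  destruct (Hreg z ltac:(lra)) as [_ [_ [Hp _]]]. nra.
Qed.

Lemma hh_zero b d t : 0 < d -> b - 7*d <= t <= b -> hh b d t = 0.
Proof. intros Hd Ht. unfold hh. rewrite cut_1, cut_0 by lra. ring. Qed.

Lemma hh_ge0 b d t : 0 <= hh b d t.
Proof. unfold hh. generalize (cut_le1 (b - 8*d) d t) (cut_ge0 b d t). lra. Qed.

Lemma hh_sum_pos f b me c d t : Hyps f b me c d -> 0 < f t ^ 2 + hh b d t.
Proof.
  intros H. assert (H' := H). unH H'.
  destruct (Rlt_dec t (b - 7*d)).
  - assert (cut (b - 8*d) d t < 1) by (apply cut_lt1; lra).
    generalize (cut_ge0 b d t). assert (0 <= f t ^ 2) by (apply pow2_ge_0). unfold hh. lra.
  - destruct (Rle_dec t b).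
    + destruct (Hreg t ltac:(lra)) as [Hft _]. generalize (hh_ge0 b d t). nra.
    + assert (0 < cut b d t) by (apply cut_pos; lra).
      generalize (cut_le1 (b - 8*d) d t). assert (0 <= f t ^ 2) by (apply pow2_ge_0). unfold hh. lra.
Qed.

Lemma ft_pos f b me c d t : Hyps f b me c d -> 0 < ft f b d t.
Proof. intros H. unfold ft. apply sqrt_lt_R0. apply (hh_sum_pos f b me c d t H). Qed.

Lemma ft_eq f b me c d t : Hyps f b me c d -> b - 7*d <= t <= b -> ft f b d t = f t.
Proof.
  intros H Ht. assert (H' := H). unH H'. unfold ft. rewrite hh_zero by auto.
  rewrite Rplus_0_r. apply sqrt_pow2. destruct (Hreg t ltac:(lra)). lra.
Qed.

Lemma Dft f b me c d t : Hyps f b me c d -> b - 7*d < t < b -> Derive (ft f b d) t = Derive f t.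
Proof.
  intros H Ht. apply Derive_ext_loc.
  apply (locally_interval _ t (b - 7*d) b ltac:(simpl; lra) ltac:(simpl; lra)).
  intros y H1 H2; simpl in H1, H2. apply (ft_eq f b me c d y H). lra.
Qed.

Lemma smooth_Cn' f n : smooth f -> Cn n f.
Proof. intros H. apply smooth_Cn. exact H. Qed.

Lemma ft_smooth f b me c d : Hyps f b me c d -> smooth (ft f b d).
Proof.
  intros H. assert (H' := H). unH H'. apply smooth_Cn. intros n. unfold ft.
  apply Cn_sqrt. intros x. apply (hh_sum_pos f b me c d x H).
  apply Cn_plus. eapply Cn_ext; [|apply Cn_mult; apply smooth_Cn'; exact Hf].
  intros x; simpl; ring. unfold hh. apply Cn_plus. apply Cn_minus. apply Cn_const.
  apply cut_Cn. apply cut_Cn.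
Qed.

Lemma RR_smooth f b me c d : Hyps f b me c d -> smooth (RR f b d).
Proof.
  intros H. apply smooth_Cn. intros n. unfold RR, c3, LL.
  apply Cn_plus; apply Cn_mult.
  apply Cn_minus. apply Cn_const. apply cut_Cn. apply smooth_Cn', (ft_smooth f b me c d H).
  apply cut_Cn. apply Cn_plus. apply Cn_const. apply Cn_minus. apply Cn_id. apply Cn_const.
Qed.

Lemma RR_eq_f f b me c d t : Hyps f b me c d -> b - 7*d <= t <= b - d -> RR f b d t = f t.
Proof.
  intros H Ht. assert (H' := H). unH H'. unfold RR, c3. rewrite cut_0 by lra.
  rewrite (ft_eq f b me c d t H) by lra. ring.
Qed.

Lemma RR_eq_L f b me c d t : Hyps f b me c d -> b <= t -> RR f b d t = LL f b d t.
Proof.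
  intros H Ht. assert (H' := H). unH H'. unfold RR, c3. rewrite cut_1 by lra. ring.
Qed.

Lemma fb_pos f b me c d : Hyps f b me c d -> 0 < f b.
Proof. intros H. assert (H' := H). unH H'. destruct (Hreg b ltac:(lra)). lra. Qed.

Lemma RR_pos f b me c d t : Hyps f b me c d -> 0 < RR f b d t.
Proof.
  intros H. assert (H' := H). unH H'. assert (Hfb := fb_pos f b me c d H).
  assert (Hft := ft_pos f b me c d t H). unfold RR, c3.
  generalize (cut_ge0 (b - d) d t) (cut_le1 (b - d) d t); intros.
  destruct (Rle_dec t (b - d)).
  - rewrite cut_0 by lra. lra.
  - assert (0 < cut (b - d) d t) by (apply cut_pos; lra).
    assert (0 < LL f b d t) by (unfold LL; lra). nra.
Qed.

Lemma DRR f b me c d t : Hyps f b me c d ->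
  Derive (RR f b d) t = - Derive (c3 b d) t * ft f b d t + (1 - c3 b d t) * Derive (ft f b d) t
     + Derive (c3 b d) t * LL f b d t + c3 b d t.
Proof.
  intros H. apply is_derive_unique. unfold RR. auto_derive.
  refine (conj (cut_exd _ _ _) (conj _ (conj (cut_exd _ _ _) (conj _ I)))).
  - apply smooth_exd, (ft_smooth f b me c d H).
  - unfold LL. auto_derive. auto.
  - replace (Derive (fun x => LL f b d x) t) with 1.
    change (Derive (fun x => c3 b d x) t) with (Derive (c3 b d) t).
    change (Derive (fun x => ft f b d x) t) with (Derive (ft f b d) t). ring.
    symmetry. apply is_derive_unique. unfold LL. auto_derive; auto; ring.
Qed.

Lemma Dc3_out b d t : 0 < d -> t <= b - d \/ b <= t -> Derive (c3 b d) t = 0.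
Proof. intros Hd Ht. unfold c3. apply Dcut_out; auto. lra. Qed.

Lemma DRR_f f b me c d t : Hyps f b me c d -> b - 7*d < t <= b - d -> Derive (RR f b d) t = Derive f t.
Proof.
  intros H Ht. assert (H' := H). unH H'. rewrite (DRR f b me c d t H).
  rewrite Dc3_out by lra. unfold c3. rewrite cut_0 by lra.
  rewrite (Dft f b me c d t H) by lra. ring.
Qed.

Lemma DRR_L f b me c d t : Hyps f b me c d -> b <= t -> Derive (RR f b d) t = 1.
Proof.
  intros H Ht. assert (H' := H). unH H'. rewrite (DRR f b me c d t H).
  rewrite Dc3_out by lra. unfold c3. rewrite cut_1 by lra. ring.
Qed.

Lemma DRR_pos f b me c d t : Hyps f b me c d -> b - 7*d < t -> 0 < Derive (RR f b d) t.
Proof.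
  intros H Ht. assert (H' := H). unH H'.
  destruct (Rlt_dec t b).
  - rewrite (DRR f b me c d t H). rewrite (Dft f b me c d t H) by lra.
    rewrite (ft_eq f b me c d t H) by lra.
    destruct (Hreg t ltac:(lra)) as [_ [_ [Hp _]]].
    assert (H0 := Dcut_ge0 (b - d) d t Hd). fold (c3 b d) in H0.
    generalize (cut_ge0 (b - d) d t) (cut_le1 (b - d) d t); intros. fold (c3 b d t) in H1, H2.
    assert (Hm : 0 <= Derive (c3 b d) t * (LL f b d t - f t)).
    { destruct (Rle_dec t (b - d)). rewrite Dc3_out by lra. lra.
      apply Rmult_le_pos; auto. unfold LL.
      assert (f t <= f b) by (apply (f_incr f b me c d); auto; lra). lra. }
    nra.
  - rewrite (DRR_L f b me c d t H) by lra. lra.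
Qed.

Lemma A_facts f b me c d : Hyps f b me c d ->
  2 * me < A1 f b d me c /\ f b + d < A1 f b d me c /\ A1 f b d me c < A2 me c /\
  b < tC f b d me c /\ tC f b d me c < tD f b d me c.
Proof.
  intros H. assert (H' := H). unH H'.
  assert (HA : 2 * me < A2 me c).
  { assert (E : A2 me c * (1 - c) = 2 * me) by (unfold A2; field; lra). nra. }
  unfold tC, tD, A1.
  generalize (Rmax_l (f b + d) (2 * me)) (Rmax_r (f b + d) (2 * me)).
  assert (Rmax (f b + d) (2 * me) < A2 me c).
  { apply Rmax_lub_lt; auto. }
  intros. lra.
Qed.

Lemma c1_0 b d t : 0 < d -> t <= b - 2*d -> c1 b d t = 0.
Proof. intros. unfold c1. apply cut_0; lra. Qed.
Lemma c1_1 b d t : 0 < d -> b - d <= t -> c1 b d t = 1.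
Proof. intros. unfold c1. apply cut_1; lra. Qed.
Lemma h1_0 b d t : 0 < d -> b - 5*d <= t -> h1 b d t = 0.
Proof. intros. unfold h1. rewrite cut_1 by lra. ring. Qed.
Lemma h1_1 b d t : 0 < d -> t <= b - 6*d -> h1 b d t = 1.
Proof. intros. unfold h1. rewrite cut_0 by lra. ring. Qed.

Lemma c2_0 f b me c d t : Hyps f b me c d -> t <= tC f b d me c -> c2 f b d me c t = 0.
Proof. intros H Ht. destruct (A_facts f b me c d H) as [_ [_ [_ [_ Ht2]]]].
  unfold c2. apply cut_0; lra. Qed.
Lemma c2_1 f b me c d t : Hyps f b me c d -> tD f b d me c <= t -> c2 f b d me c t = 1.
Proof. intros H Ht. destruct (A_facts f b me c d H) as [_ [_ [_ [_ Ht2]]]].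
  unfold c2. apply cut_1; lra. Qed.
Lemma Dc2_out f b me c d t : Hyps f b me c d -> t <= tC f b d me c \/ tD f b d me c <= t ->
  Derive (c2 f b d me c) t = 0.
Proof. intros H Ht. destruct (A_facts f b me c d H) as [_ [_ [_ [_ Ht2]]]].
  unfold c2. apply Dcut_out; lra. Qed.
Lemma Dc2_ge0 f b me c d t : Hyps f b me c d -> 0 <= Derive (c2 f b d me c) t.
Proof. intros H. destruct (A_facts f b me c d H) as [_ [_ [_ [_ Ht2]]]].
  unfold c2. apply Dcut_ge0; lra. Qed.

Lemma RR_gt_2me f b me c d t : Hyps f b me c d -> tC f b d me c < t -> 2 * me < RR f b d t.
Proof.
  intros H Ht. destruct (A_facts f b me c d H) as [H1 [H2 [H3 [H4 H5]]]].
  rewrite (RR_eq_L f b me c d t H) by lra. unfold LL. unfold tC in Ht. lra.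
Qed.

Lemma WW_pos f b me c d t : Hyps f b me c d -> 0 < WW f b d me c t.
Proof.
  intros H. assert (H' := H). unH H'. destruct (A_facts f b me c d H) as [H1 [H2 [H3 [H4 H5]]]].
  assert (HR := RR_pos f b me c d t H). unfold WW.
  generalize (cut_ge0 (b - 2*d) d t) (cut_le1 (b - 2*d) d t); intros. fold (c1 b d t) in H0, H6.
  generalize (cut_ge0 (tC f b d me c) (tD f b d me c - tC f b d me c) t)
    (cut_le1 (tC f b d me c) (tD f b d me c - tC f b d me c) t); intros.
  fold (c2 f b d me c t) in H7, H8.
  destruct (Rlt_dec t (b - d)).
  - rewrite (c2_0 f b me c d t H) by lra.
    assert (c1 b d t < 1) by (unfold c1; apply cut_lt1; lra).
    assert (0 < Derive f t ^ 2 + h1 b d t).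
    { destruct (Rlt_dec t (b - 5*d)).
      assert (0 < h1 b d t) by (unfold h1; assert (cut (b - 6*d) d t < 1) by (apply cut_lt1; lra); lra).
      generalize (pow2_ge_0 (Derive f t)); lra.
      destruct (Hreg t ltac:(lra)) as [_ [_ [Hp _]]]. unfold h1. 
      generalize (cut_le1 (b - 6*d) d t). nra. }
    nra.
  - rewrite (c1_1 b d t) by lra.
    destruct (Rle_dec t (tC f b d me c)).
    + rewrite (c2_0 f b me c d t H) by lra. lra.
    + assert (HR2 := RR_gt_2me f b me c d t H ltac:(lra)).
      assert (0 < 1 - 2 * me / RR f b d t).
      { assert (2 * me / RR f b d t < 1). apply div_lt1; lra. lra. }
      assert (0 < c2 f b d me c t) by (unfold c2; apply cut_pos; lra).
      nra.
Qed.

Lemma WW_smooth f b me c d : Hyps f b me c d -> smooth (WW f b d me c).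
Proof.
  intros H. assert (H' := H). unH H'. apply smooth_Cn. intros n. unfold WW, c1, h1, c2.
  assert (Hf' := smooth_Derive f Hf).
  apply Cn_plus; [apply Cn_plus|].
  - apply Cn_mult. apply Cn_minus; [apply Cn_const| apply cut_Cn].
    apply Cn_plus. eapply Cn_ext; [|apply Cn_mult; apply smooth_Cn'; exact Hf'].
    intros x; simpl; ring. apply Cn_minus; [apply Cn_const| apply cut_Cn].
  - apply Cn_mult. apply Cn_minus; apply cut_Cn. apply Cn_const.
  - apply Cn_mult. apply cut_Cn. apply Cn_minus. apply Cn_const.
    apply Cn_scal. apply Cn_inv. intros x. generalize (RR_pos f b me c d x H). lra.
    apply smooth_Cn', (RR_smooth f b me c d H).
Qed.

Lemma JJ_smooth f b me c d : Hyps f b me c d -> smooth (JJ f b d me c).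
Proof.
  intros H. assert (H' := H). unH H'. apply smooth_Cn. intros n. unfold JJ, h1.
  apply Cn_plus. apply Cn_minus. apply Cn_const. apply cut_Cn.
  apply Cn_mult. apply Cn_minus. apply Cn_const. apply Cn_minus. apply Cn_const. apply cut_Cn.
  apply Cn_mult. apply smooth_Cn', smooth_Derive, (RR_smooth f b me c d H).
  apply Cn_inv. intros x. generalize (sqrt_lt_R0 _ (WW_pos f b me c d x H)). lra.
  apply Cn_sqrt. intros x. apply (WW_pos f b me c d x H).
  apply smooth_Cn', (WW_smooth f b me c d H).
Qed.

Lemma JJ_left f b me c d t : Hyps f b me c d -> t <= b - 6*d -> JJ f b d me c t = 1.
Proof. intros H Ht. assert (H' := H). unH H'. unfold JJ. rewrite h1_1 by auto. ring. Qed.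

Lemma JJ_ratio f b me c d t : Hyps f b me c d -> b - 5*d <= t ->
  JJ f b d me c t = Derive (RR f b d) t / sqrt (WW f b d me c t).
Proof. intros H Ht. assert (H' := H). unH H'. unfold JJ. rewrite h1_0 by auto. ring. Qed.

Lemma JJ_pos f b me c d t : Hyps f b me c d -> 0 < JJ f b d me c t.
Proof.
  intros H. assert (H' := H). unH H'.
  destruct (Rle_dec t (b - 6*d)).
  - rewrite (JJ_left f b me c d t H) by auto. lra.
  - assert (HR := DRR_pos f b me c d t H ltac:(lra)).
    assert (HW := sqrt_lt_R0 _ (WW_pos f b me c d t H)).
    assert (0 < Derive (RR f b d) t / sqrt (WW f b d me c t)) by (apply Rdiv_lt_0_compat; auto).
    unfold JJ, h1. generalize (cut_ge0 (b - 6*d) d t) (cut_le1 (b - 6*d) d t). intros.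
    set (k := cut (b - 6*d) d t) in *. set (q := Derive (RR f b d) t / sqrt (WW f b d me c t)) in *.
    replace (1 - k + (1 - (1 - k)) * q) with ((1 - k) + k * q) by ring.
    destruct (Rlt_dec k 1). assert (0 <= k * q) by (apply Rmult_le_pos; lra). lra.
    assert (Hk : k = 1) by lra. rewrite Hk. lra.
Qed.

Lemma WW_f f b me c d t : Hyps f b me c d -> b - 5*d <= t <= b - 2*d -> WW f b d me c t = Derive f t ^ 2.
Proof.
  intros H Ht. assert (H' := H). unH H'. destruct (A_facts f b me c d H) as [H1 [H2 [H3 [H4 H5]]]].
  unfold WW. rewrite c1_0, h1_0 by lra. rewrite (c2_0 f b me c d t H) by lra. ring.
Qed.

Lemma JJ_one f b me c d t : Hyps f b me c d -> b - 5*d <= t <= b - 2*d -> JJ f b d me c t = 1.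
Proof.
  intros H Ht. assert (H' := H). unH H'. rewrite (JJ_ratio f b me c d t H) by lra.
  rewrite (WW_f f b me c d t H Ht). rewrite (DRR_f f b me c d t H) by lra.
  destruct (Hreg t ltac:(lra)) as [_ [_ [Hp _]]]. rewrite sqrt_pow2 by lra. field. lra.
Qed.

Lemma WW_S f b me c d t : Hyps f b me c d -> tD f b d me c <= t ->
  WW f b d me c t = 1 - 2 * me / RR f b d t.
Proof.
  intros H Ht. assert (H' := H). unH H'. destruct (A_facts f b me c d H) as [H1 [H2 [H3 [H4 H5]]]].
  unfold WW. rewrite c1_1 by lra. rewrite (c2_1 f b me c d t H) by lra. ring.
Qed.

Lemma JJ_right f b me c d t : Hyps f b me c d -> tD f b d me c <= t -> 1 <= JJ f b d me c t.
Proof.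
  intros H Ht. assert (H' := H). unH H'. destruct (A_facts f b me c d H) as [H1 [H2 [H3 [H4 H5]]]].
  rewrite (JJ_ratio f b me c d t H) by lra. rewrite (DRR_L f b me c d t H) by lra.
  assert (HW := WW_pos f b me c d t H). rewrite (WW_S f b me c d t H Ht) in HW |- *.
  assert (HR := RR_pos f b me c d t H).
  assert (0 < 2 * me / RR f b d t) by (apply Rdiv_lt_0_compat; lra).
  assert (Hs : sqrt (1 - 2 * me / RR f b d t) < 1).
  { rewrite <- sqrt_1 at 2. apply sqrt_lt_1_alt. lra. }
  assert (0 < sqrt (1 - 2 * me / RR f b d t)) by (apply sqrt_lt_R0; auto).
  apply Rmult_le_reg_r with (sqrt (1 - 2 * me / RR f b d t)); auto.
  replace (1 / sqrt (1 - 2 * me / RR f b d t) * sqrt (1 - 2 * me / RR f b d t)) with 1 by (field; lra). lra.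
Qed.

Lemma SS_der f b me c d t : Hyps f b me c d -> is_derive (SS f b d me c) t (JJ f b d me c t).
Proof. intros H. apply prim_der, (JJ_smooth f b me c d H). Qed.

Lemma SS_smooth f b me c d : Hyps f b me c d -> smooth (SS f b d me c).
Proof. intros H. eapply smooth_of_der. apply (JJ_smooth f b me c d H). intros t; apply SS_der, H. Qed.

Lemma SS_mvt f b me c d x y : Hyps f b me c d -> x <= y ->
  exists z, x <= z <= y /\ SS f b d me c y - SS f b d me c x = JJ f b d me c z * (y - x).
Proof.
  intros H Hxy. destruct (MVT_gen (SS f b d me c) x y (JJ f b d me c)) as [z [Hz E]].
  intros w _. apply SS_der, H.
  intros w _. apply smooth_cont, (SS_smooth f b me c d H).
  rewrite Rmin_left, Rmax_right in Hz by lra. exists z. auto.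
Qed.

Lemma SS_eq f b me c d t : Hyps f b me c d -> b - 5*d <= t <= b - 2*d -> SS f b d me c t = t.
Proof.
  intros H Ht. assert (H' := H). unH H'.
  assert (H0 : SS f b d me c (b - 4*d) = b - 4*d).
  { unfold SS. rewrite RInt_point. unfold zero; simpl. ring. }
  destruct (Rle_dec (b - 4*d) t).
  - destruct (SS_mvt f b me c d (b - 4*d) t H r) as [z [Hz E]].
    rewrite (JJ_one f b me c d z H) in E by lra. lra.
  - destruct (SS_mvt f b me c d t (b - 4*d) H ltac:(lra)) as [z [Hz E]].
    rewrite (JJ_one f b me c d z H) in E by lra. lra.
Qed.

Lemma SS_surj f b me c d : Hyps f b me c d -> forall s, exists t, SS f b d me c t = s.
Proof.
  intros H s. assert (H' := H). unH H'. destruct (A_facts f b me c d H) as [H1 [H2 [H3 [H4 H5]]]].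
  set (S := SS f b d me c).
  set (t1 := b - 6*d - Rabs s - Rabs (S (b - 6*d)) - 1).
  set (t2 := tD f b d me c + Rabs s + Rabs (S (tD f b d me c)) + 1).
  assert (E1 : S t1 < s).
  { destruct (SS_mvt f b me c d t1 (b - 6*d) H) as [z [Hz E]]. unfold t1.
    generalize (Rabs_pos s) (Rabs_pos (S (b - 6*d))); lra.
    rewrite (JJ_left f b me c d z H) in E by lra. fold S in E. unfold t1 in *.
    generalize (Rle_abs (- s)) (Rle_abs (S (b - 6*d))). rewrite Rabs_Ropp. lra. }
  assert (E2 : s < S t2).
  { destruct (SS_mvt f b me c d (tD f b d me c) t2 H) as [z [Hz E]]. unfold t2.
    generalize (Rabs_pos s) (Rabs_pos (S (tD f b d me c))); lra.
    assert (HJ := JJ_right f b me c d z H ltac:(lra)). fold S in E. unfold t2 in *.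
    generalize (Rle_abs s) (Rle_abs (- S (tD f b d me c))). rewrite Rabs_Ropp.
    generalize (Rabs_pos s) (Rabs_pos (S (tD f b d me c))). intros. 
    assert (JJ f b d me c z * (tD f b d me c + Rabs s + Rabs (S (tD f b d me c)) + 1 - tD f b d me c)
       >= 1 * (Rabs s + Rabs (S (tD f b d me c)) + 1)).
    { apply Rle_ge. replace (tD f b d me c + Rabs s + Rabs (S (tD f b d me c)) + 1 - tD f b d me c)
       with (Rabs s + Rabs (S (tD f b d me c)) + 1) by ring. apply Rmult_le_compat_r; lra. }
    lra. }
  destruct (IVT_gen S t1 t2 s) as [t [_ Ht]].
  intros x. apply smooth_cont, (SS_smooth f b me c d H).
  rewrite Rmin_left, Rmax_right by lra. lra.
  exists t. exact Ht.
Qed.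


Lemma DWW f b me c d t : Hyps f b me c d ->
  Derive (WW f b d me c) t =
    - Derive (c1 b d) t * (Derive f t ^ 2 + h1 b d t)
    + (1 - c1 b d t) * (2 * Derive f t * Derive (Derive f) t + Derive (h1 b d) t)
    + (Derive (c1 b d) t - Derive (c2 f b d me c) t) * c
    + Derive (c2 f b d me c) t * (1 - 2 * me / RR f b d t)
    + c2 f b d me c t * (2 * me * Derive (RR f b d) t / RR f b d t ^ 2).
Proof.
  intros H. assert (H' := H). unH H'. assert (HR := RR_pos f b me c d t H).
  apply is_derive_unique. unfold WW. auto_derive.
  repeat match goal with |- _ /\ _ => split end.
  - unfold c1; apply cut_exd.
  - apply smooth_exd, smooth_Derive, Hf.
  - apply smooth_exd. apply smooth_Cn. intros n. unfold h1. apply Cn_minus; [apply Cn_const|apply cut_Cn].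
  - unfold c1; apply cut_exd.
  - unfold c2; apply cut_exd.
  - unfold c2; apply cut_exd.
  - apply smooth_exd, (RR_smooth f b me c d H).
  - lra.
  - exact I.
  - change (Derive (fun x => c1 b d x) t) with (Derive (c1 b d) t).
    change (Derive (fun x => Derive f x) t) with (Derive (Derive f) t).
    change (Derive (fun x => h1 b d x) t) with (Derive (h1 b d) t).
    change (Derive (fun x => c2 f b d me c x) t) with (Derive (c2 f b d me c) t).
    change (Derive (fun x => RR f b d x) t) with (Derive (RR f b d) t).
    field. lra.
Qed.

Lemma Dh1_0 b d t : 0 < d -> b - 5*d <= t -> Derive (h1 b d) t = 0.
Proof.
  intros Hd Ht. apply is_derive_unique. unfold h1. auto_derive. apply cut_exd.
  change (Derive (fun x => cut (b - 6 * d) d x) t) with (Derive (cut (b - 6*d) d) t).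
  rewrite Dcut_out by lra. ring.
Qed.

Lemma Dc1_out b d t : 0 < d -> t <= b - 2*d \/ b - d <= t -> Derive (c1 b d) t = 0.
Proof. intros Hd Ht. unfold c1. apply Dcut_out; auto. lra. Qed.

Lemma key_ineq f b me c d t : Hyps f b me c d -> b - 5*d <= t ->
  RR f b d t * Derive (WW f b d me c) t <= (1 - WW f b d me c t) * Derive (RR f b d) t.
Proof.
  intros H Ht. assert (H' := H). unH H'. destruct (A_facts f b me c d H) as [H1 [H2 [H3 [H4 H5]]]].
  rewrite (DWW f b me c d t H). rewrite (Dh1_0 b d t Hd Ht). unfold WW. rewrite (h1_0 b d t Hd Ht).
  assert (Hk := cut_ge0 (b - 2*d) d t). assert (Hk1 := cut_le1 (b - 2*d) d t).
  fold (c1 b d t) in Hk, Hk1. assert (Hk' : 0 <= Derive (c1 b d) t) by (unfold c1; apply Dcut_ge0; lra).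
  destruct (Rle_dec t (b - d)).
  - rewrite (c2_0 f b me c d t H) by lra. rewrite (Dc2_out f b me c d t H) by lra.
    rewrite (RR_eq_f f b me c d t H) by lra. rewrite (DRR_f f b me c d t H) by lra.
    destruct (Hreg t ltac:(lra)) as [HF [Hs [Hp Hpc]]].
    unfold warped_scal in Hs.
    set (F := f t) in *. set (p := Derive f t) in *. set (q := Derive (Derive f) t) in *.
    set (k := c1 b d t) in *. set (k' := Derive (c1 b d) t) in *.
    assert (Hq : 2 * F * q <= 1 - p ^ 2).
    { assert (E : 2 * (1 - p ^ 2) / F ^ 2 - 4 * q / F = (2 / F ^ 2) * ((1 - p ^ 2) - 2 * F * q)) by (field; lra).
      rewrite E in Hs. assert (0 < 2 / F ^ 2) by (apply Rdiv_lt_0_compat; [lra| apply pow_lt; lra]).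
      assert (0 < (1 - p ^ 2) - 2 * F * q). 
      { apply Rmult_lt_reg_l with (2 / F ^ 2); auto. lra. }
      lra. }
    replace (F * (- k' * (p ^ 2 + 0) + (1 - k) * (2 * p * q + 0) + (k' - 0) * c + 0 * (1 - 2 * me / F) +
       0 * (2 * me * p / F ^ 2))) with (k' * F * (c - p ^ 2) + ((1 - k) * p) * (2 * F * q)) by (field; lra).
    replace ((1 - ((1 - k) * (p ^ 2 + 0) + (k - 0) * c + 0 * (1 - 2 * me / F))) * p)
      with (((1 - k) * p) * (1 - p ^ 2) + k * (1 - c) * p) by ring.
    assert (0 <= k' * F) by (apply Rmult_le_pos; lra).
    assert (k' * F * (c - p ^ 2) <= 0) by nra.
    assert (((1 - k) * p) * (2 * F * q) <= ((1 - k) * p) * (1 - p ^ 2)).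
    { apply Rmult_le_compat_l; auto. apply Rmult_le_pos; lra. }
    assert (0 <= k * (1 - c) * p) by (apply Rmult_le_pos; [apply Rmult_le_pos|]; lra).
    lra.
  - rewrite (c1_1 b d t) by lra. rewrite (Dc1_out b d t) by lra.
    destruct (Rle_dec t (tC f b d me c)).
    + rewrite (c2_0 f b me c d t H) by lra. rewrite (Dc2_out f b me c d t H) by lra.
      assert (HR := DRR_pos f b me c d t H ltac:(lra)).
      replace (RR f b d t * (- 0 * (Derive f t ^ 2 + 0) + (1 - 1) * (2 * Derive f t * Derive (Derive f) t + 0) +
        (0 - 0) * c + 0 * (1 - 2 * me / RR f b d t) + 0 * (2 * me * Derive (RR f b d) t / RR f b d t ^ 2)))
        with 0 by ring.
      replace (1 - ((1 - 1) * (Derive f t ^ 2 + 0) + (1 - 0) * c + 0 * (1 - 2 * me / RR f b d t)))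
        with (1 - c) by ring.
      apply Rmult_le_pos; lra.
    + rewrite (DRR_L f b me c d t H) by lra.
      assert (HR := RR_gt_2me f b me c d t H ltac:(lra)).
      assert (Hk2 := cut_ge0 (tC f b d me c) (tD f b d me c - tC f b d me c) t).
      assert (Hk21 := cut_le1 (tC f b d me c) (tD f b d me c - tC f b d me c) t).
      fold (c2 f b d me c t) in Hk2, Hk21. assert (Hk2' := Dc2_ge0 f b me c d t H).
      set (R := RR f b d t) in *. set (k := c2 f b d me c t) in *.
      set (k' := Derive (c2 f b d me c) t) in *.
      replace (R * (- 0 * (Derive f t ^ 2 + 0) + (1 - 1) * (2 * Derive f t * Derive (Derive f) t + 0) +
        (0 - k') * c + k' * (1 - 2 * me / R) + k * (2 * me * 1 / R ^ 2)))
        with (k' * (R * (1 - c) - 2 * me) + k * (2 * me / R)) by (field; lra).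
      replace ((1 - ((1 - 1) * (Derive f t ^ 2 + 0) + (1 - k) * c + k * (1 - 2 * me / R))) * 1)
        with ((1 - k) * (1 - c) + k * (2 * me / R)) by (field; lra).
      assert (k' * (R * (1 - c) - 2 * me) <= 0).
      { destruct (Rle_dec t (tD f b d me c)).
        - assert (R <= A2 me c).
          { unfold R. rewrite (RR_eq_L f b me c d t H) by lra. unfold LL, tD in *. lra. }
          assert (A2 me c * (1 - c) = 2 * me) by (unfold A2; field; lra).
          assert (R * (1 - c) - 2 * me <= 0) by nra. nra.
        - unfold k'. rewrite (Dc2_out f b me c d t H) by lra. lra. }
      assert (0 <= (1 - k) * (1 - c)) by (apply Rmult_le_pos; lra). lra.
Qed.

Lemma construction f b me c d : Hyps f b me c d -> exists P : R -> R,
  smooth P /\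
  (forall x, x < b - 2*d -> P x = f x /\ Derive P x = Derive f x /\ Derive (Derive P) x = Derive (Derive f) x) /\
  (forall x, b - 2*d <= x -> 0 < P x /\ 0 <= warped_scal P x /\ 0 < Derive P x) /\
  (exists x0, forall x, x0 <= x -> 2 * me < P x /\ Derive P x = sqrt (1 - 2 * me / P x)).
Proof.
  intros H. assert (H' := H). unH H'. destruct (A_facts f b me c d H) as [HA1 [HA1' [HA3 [HA4 HA5]]]].
  assert (HDS : forall t, Derive (SS f b d me c) t = JJ f b d me c t).
  { intros t. apply is_derive_unique, SS_der, H. }
  destruct (inv_smooth (SS f b d me c) (SS_smooth f b me c d H)
     ltac:(intros t; rewrite HDS; apply (JJ_pos f b me c d t H)) (SS_surj f b me c d H))
     as [T [HT [HST [HTS HDT]]]].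
  assert (HSinc : forall x y, x < y -> SS f b d me c x < SS f b d me c y).
  { apply incr_of_der. intros; apply smooth_exd, (SS_smooth f b me c d H).
    intros t; rewrite HDS; apply (JJ_pos f b me c d t H). }
  assert (HTmon : forall x y, x <= y -> T x <= T y).
  { intros x y Hxy. destruct (Rle_dec (T x) (T y)); auto.
    assert (SS f b d me c (T y) < SS f b d me c (T x)) by (apply HSinc; lra).
    rewrite !HST in H0. lra. }
  assert (HTid : forall x, b - 5*d <= x <= b - 2*d -> T x = x).
  { intros x Hx. rewrite <- (SS_eq f b me c d x H Hx) at 1. apply HTS. }
  assert (HTge : forall x, b - 5*d <= x -> b - 5*d <= T x).
  { intros x Hx. rewrite <- (HTid (b - 5*d)) by lra. apply HTmon; auto. }
  set (Fo := fun x => RR f b d (T x)).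
  assert (HRs := RR_smooth f b me c d H).
  assert (HFo : smooth Fo).
  { apply smooth_Cn. intros n. unfold Fo. apply Cn_comp; apply smooth_Cn'; auto. }
  assert (HFoe : forall x, b - 5*d < x < b - 2*d -> f x = Fo x).
  { intros x Hx. unfold Fo. rewrite HTid by lra. symmetry. apply (RR_eq_f f b me c d x H). lra. }
  set (P := fun x => if Rle_dec x ((b - 5*d + (b - 2*d)) / 2) then f x else Fo x).
  assert (HPs : smooth P) by (apply smooth_piece; auto; lra).
  assert (HPl : forall x, x < b - 2*d -> P x = f x).
  { intros x Hx. unfold P. destruct (Rle_dec x _); auto. symmetry. apply HFoe. lra. }
  assert (HPr : forall x, b - 5*d < x -> P x = Fo x).
  { intros x Hx. unfold P. destruct (Rle_dec x _); auto. apply HFoe. lra. }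
  assert (HD1 : forall x, b - 5*d <= x -> Derive Fo x = sqrt (WW f b d me c (T x))).
  { intros x Hx. unfold Fo. rewrite Derive_comp. 2: apply smooth_exd; auto. 2: apply smooth_exd; auto.
    rewrite HDT, HDS. rewrite (JJ_ratio f b me c d (T x) H (HTge x Hx)).
    assert (HR := DRR_pos f b me c d (T x) H ltac:(generalize (HTge x Hx); lra)).
    assert (HW := sqrt_lt_R0 _ (WW_pos f b me c d (T x) H)). field. lra. }
  assert (HD2 : forall x, b - 5*d < x -> Derive (Derive Fo) x =
     Derive (WW f b d me c) (T x) / (2 * Derive (RR f b d) (T x))).
  { intros x Hx. rewrite (Derive_ext_loc _ (fun y => sqrt (WW f b d me c (T y)))).
    2: { apply (locally_interval _ x (b - 5*d) p_infty ltac:(simpl; lra) I).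
         intros y Hy _. simpl in Hy. apply HD1. lra. }
    assert (HWp := WW_pos f b me c d (T x) H).
    assert (HR := DRR_pos f b me c d (T x) H ltac:(generalize (HTge x ltac:(lra)); lra)).
    assert (HJr := JJ_ratio f b me c d (T x) H (HTge x ltac:(lra))).
    apply is_derive_unique. eapply is_derive_val.
    apply (is_derive_comp sqrt (fun y => WW f b d me c (T y))). apply is_derive_sqrt_pos; auto.
    apply (is_derive_comp (WW f b d me c) T). apply Derive_correct, smooth_exd, (WW_smooth f b me c d H).
    apply Derive_correct, smooth_exd, HT.
    rewrite HDT, HDS, HJr. unfold scal; simpl; unfold mult; simpl.
    assert (0 < sqrt (WW f b d me c (T x))) by (apply sqrt_lt_R0; auto).
    field. lra. }
  exists P. split; [exact HPs|split; [|split]].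
  - intros x Hx. split. apply HPl; auto.
    apply (loc_D2 P f x m_infty (b - 2*d) I ltac:(simpl; lra)).
    intros y _ Hy. simpl in Hy. apply HPl; auto.
  - intros x Hx.
    destruct (loc_D2 P Fo x (b - 5*d) p_infty ltac:(simpl; lra) I) as [E1 E2].
    { intros y Hy _. simpl in Hy. apply HPr; auto. }
    unfold warped_scal. rewrite E1, E2, HD1, HD2 by lra. rewrite !HPr by lra. unfold Fo.
    set (t := T x). assert (Ht : b - 5*d <= t) by (apply HTge; lra).
    assert (HWp := WW_pos f b me c d t H).
    assert (HR := DRR_pos f b me c d t H ltac:(lra)).
    assert (HRp := RR_pos f b me c d t H).
    assert (HK := key_ineq f b me c d t H Ht).
    split; [auto|split].
    + rewrite pow2_sqrt by lra.
      set (R := RR f b d t) in *. set (W := WW f b d me c t) in *.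
      set (DR := Derive (RR f b d) t) in *. set (DW := Derive (WW f b d me c) t) in *.
      replace (2 * (1 - W) / R ^ 2 - 4 * (DW / (2 * DR)) / R)
        with ((2 / (R ^ 2 * DR)) * ((1 - W) * DR - R * DW)) by (field; lra).
      apply Rmult_le_pos. apply Rlt_le, Rdiv_lt_0_compat. lra. apply Rmult_lt_0_compat; auto. apply pow_lt; lra.
      lra.
    + apply sqrt_lt_R0; auto.
  - exists (SS f b d me c (tD f b d me c)). intros x Hx.
    assert (Htx : tD f b d me c <= T x).
    { rewrite <- (HTS (tD f b d me c)). apply HTmon; auto. }
    assert (Hxa : b - 5*d < x).
    { assert (SS f b d me c (b - 2*d) < SS f b d me c (tD f b d me c)) by (apply HSinc; lra).
      rewrite (SS_eq f b me c d (b - 2*d) H) in H0 by lra. lra. }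
    destruct (loc_D2 P Fo x (b - 5*d) p_infty ltac:(simpl; lra) I) as [E1 E2].
    { intros y Hy _. simpl in Hy. apply HPr; auto. }
    rewrite E1, HPr by lra. rewrite HD1 by lra. unfold Fo.
    rewrite (WW_S f b me c d (T x) H Htx). split; auto.
    apply (RR_gt_2me f b me c d (T x) H). lra.
Qed.


Theorem proposition2p2 (a b : R) (f : R -> R) :
  a < b ->
  smooth f ->
  (forall s, a <= s <= b -> 0 < f s) ->
  (forall s, a <= s <= b -> 0 < warped_scal f s) ->
  0 < warped_mean_curv f b ->
  0 <= warped_hawking_mass f b ->
  forall me : R, warped_hawking_mass f b < me ->
  exists F : R -> R,
    smooth F /\
    (forall s, 0 <= s -> 0 < F s) /\
    (forall s, 0 <= s -> 0 <= warped_scal F s) /\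
    (exists s0, 0 <= s0 /\ schwarzschild_end me F s0) /\
    (forall s, 0 <= s < (b - a) / 2 -> F s = f (a + s)) /\
    ((forall s, a <= s <= b -> 0 < Derive f s) ->
       forall s, 0 <= s -> 0 < warped_mean_curv F s).
Proof.
  intros Hab Hf Hpos Hscal Hmc Hm0 me Hme.
  unfold warped_mean_curv, warped_hawking_mass in *.
  set (fb := f b) in *. set (p := Derive f b) in *.
  assert (Hfb : 0 < fb) by (apply Hpos; lra).
  assert (Hp : 0 < p).
  { assert (0 < 2 * p) . { apply Rmult_lt_reg_r with (/ fb). apply Rinv_0_lt_compat; auto.
      rewrite Rmult_0_l. exact Hmc. } lra. }
  assert (Hp1 : p ^ 2 <= 1).
  { assert (0 <= 1 - p ^ 2). { apply Rmult_le_reg_l with (fb / 2). lra. lra. } lra. }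
  assert (Hme0 : 0 < me).
  { assert (0 <= fb / 2 * (1 - p ^ 2)) by auto. lra. }
  set (th := Rmin (p ^ 2 / 2) ((2 * me - fb * (1 - p ^ 2)) / (2 * fb))).
  assert (Hth1 : th <= p ^ 2 / 2) by apply Rmin_l.
  assert (Hth2 : th <= (2 * me - fb * (1 - p ^ 2)) / (2 * fb)) by apply Rmin_r.
  assert (Hp2 : 0 < p ^ 2) by (apply pow_lt; lra).
  assert (Hth0 : 0 < th).
  { unfold th. apply Rmin_glb_lt. lra. apply Rdiv_lt_0_compat; lra. }
  set (c := p ^ 2 - th).
  assert (Hc : 0 < c < 1) by (unfold c; lra).
  assert (Hcp : c < p ^ 2) by (unfold c; lra).
  assert (Hfc : fb * (1 - c) < 2 * me).
  { unfold c. replace (fb * (1 - (p ^ 2 - th))) with (fb * (1 - p ^ 2) + fb * th) by ring.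
    assert (fb * th <= (2 * me - fb * (1 - p ^ 2)) / 2).
    { replace ((2 * me - fb * (1 - p ^ 2)) / 2) with (fb * ((2 * me - fb * (1 - p ^ 2)) / (2 * fb))) by (field; lra).
      apply Rmult_le_compat_l; lra. }
    lra. }
  assert (HA2 : fb < A2 me c).
  { unfold A2. apply Rmult_lt_reg_r with (1 - c). lra.
    replace (2 * me / (1 - c) * (1 - c)) with (2 * me) by (field; lra). lra. }
  assert (Hsc : sqrt c < p).
  { rewrite <- (sqrt_pow2 p) by lra. apply sqrt_lt_1_alt. lra. }
  assert (Hcont := smooth_cont (Derive f) b (smooth_Derive f Hf)).
  destruct (Hcont (p - sqrt c) ltac:(lra)) as [d0 [Hd0 Hd0']].
  set (d := Rmin (d0 / 9) (Rmin ((b - a) / 10) ((A2 me c - fb) / 2))).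
  assert (Hd1 : d <= d0 / 9) by apply Rmin_l.
  assert (Hd2 : d <= (b - a) / 10) by (eapply Rle_trans; [apply Rmin_r| apply Rmin_l]).
  assert (Hd3 : d <= (A2 me c - fb) / 2) by (eapply Rle_trans; [apply Rmin_r| apply Rmin_r]).
  assert (Hd : 0 < d).
  { unfold d. apply Rmin_glb_lt. lra. apply Rmin_glb_lt; lra. }
  assert (HH : Hyps f b me c d).
  { split; [auto|split; [auto|split; [|split; [auto|split; [auto|]]]]].
    - intros t Ht. split; [apply Hpos; lra|split; [apply Hscal; lra|]].
      assert (Hdt : Derive f t > sqrt c).
      { destruct (Req_dec t b) as [->|Htb]. fold p. lra.
        assert (A := Hd0' t). simpl in A. unfold R_dist in A.
        assert (Rabs (Derive f t - p) < p - sqrt c).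
        { apply A. split. split. constructor. auto. rewrite Rabs_left1 by lra. lra. }
        apply Rabs_def2 in H. lra. }
      assert (0 <= sqrt c) by apply sqrt_pos.
      split. lra.
      assert (sqrt c * sqrt c = c) by (apply sqrt_sqrt; lra). nra.
    - fold fb. lra. }
  destruct (construction f b me c d HH) as [P [HPs [HPl [HPr [x0 Hx0]]]]].
  exists (fun s => P (a + s)). split; [|split; [|split; [|split]]].
  - apply smooth_trans, HPs.
  - intros s Hs. destruct (Rlt_dec (a + s) (b - 2*d)).
    + destruct (HPl (a + s) r) as [-> _]. apply Hpos; lra.
    + apply (HPr (a + s)). lra.
  - intros s Hs. unfold warped_scal. rewrite Derive_trans, Derive2_trans by auto.
    destruct (Rlt_dec (a + s) (b - 2*d)).
    + destruct (HPl (a + s) r) as [E0 [E1 E2]]. rewrite E0, E1, E2.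
      apply Rlt_le. apply Hscal. lra.
    + apply (HPr (a + s)). lra.
  - exists (Rmax 0 (x0 - a)). split. apply Rmax_l.
    intros s Hs. rewrite Derive_trans by auto. apply Hx0.
    generalize (Rmax_r 0 (x0 - a)). lra.
  - split.
    + intros s Hs. destruct (HPl (a + s)) as [-> _]; auto. lra.
    + intros Hd' s Hs. rewrite Derive_trans by auto.
      destruct (Rlt_dec (a + s) (b - 2*d)).
      * destruct (HPl (a + s) r) as [E0 [E1 _]]. rewrite E0, E1.
        apply Rdiv_lt_0_compat. assert (0 < Derive f (a + s)) by (apply Hd'; lra). lra. apply Hpos; lra.
      * destruct (HPr (a + s) ltac:(lra)) as [A [_ B]]. apply Rdiv_lt_0_compat; lra.
Qed.
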